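(* Let $n\ge 2$ and let $A,B$ be positive words (words in the letters $\sigma_1,\dots,\sigma_{n-1},x_1,\dots,x_{n-1}$), and let $i,k\in\{1,\dots,n-1\}$. (1) Suppose $\sigma_i A\doteq \sigma_k B$. If $k=i$ then $A\doteq B$. If $|k-i|=1$ then there is a positive word $Z$ with $A\doteq \sigma_k\sigma_i Z$ and $B\doteq \sigma_i\sigma_k Z$. If $|k-i|\ge 2$ then there is a positive word $Z$ with $A\doteq \sigma_k Z$ and $B\doteq\sigma_i Z$. (2) Suppose $\sigma_i A\doteq x_k B$. If $|k-i|=1$ then there is a positive word $Z$ with $A\doteq \sigma_k x_i Z$ and $B\doteq \sigma_i\sigma_k Z$. If $|k-i|\ne 1$ then there is a positive word $Z$ with $A\doteq x_k Z$ and $B\doteq \sigma_i Z$. (3) Suppose $x_i A\doteq x_k B$. If $k=i$ then $A\doteq B$. If $|k-i|\ge 2$ then there is a positive word $Z$ with $A\doteq x_k Z$ and $B\doteq x_i Z$. The case $|k-i|=1$ is impossible, i.e. $x_iA\doteq x_kB$ never holds when $|k-i|=1$. The same statements hold for multiples on the right, i.e. with all words written in reverse order: e.g. if $A\sigma_i\doteq B\sigma_k$ with $|k-i|=1$ then $A\doteq Z\sigma_i\sigma_k$, $B\doteq Z\sigma_k\sigma_i$; if $A\sigma_i\doteq Bx_k$ with $|k-i|=1$ then $A\doteq Z x_i\sigma_k$, $B\doteq Z\sigma_k\sigma_i$; if $Ax_i\doteq Bx_k$ with $|k-i|=1$ this is impossible; and analogously in the remaining cases.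
   Context: Fix $n\ge 2$. The positive singular braid monoid $SB_n^+$ is the monoid with generators $\sigma_1,\dots,\sigma_{n-1},x_1,\dots,x_{n-1}$ and relations: $\sigma_i\sigma_j=\sigma_j\sigma_i$ and $x_ix_j=x_jx_i$ if $|i-j|>1$; $x_i\sigma_j=\sigma_jx_i$ if $|i-j|\ne 1$; $\sigma_i\sigma_{i+1}\sigma_i=\sigma_{i+1}\sigma_i\sigma_{i+1}$; $\sigma_i\sigma_{i+1}x_i=x_{i+1}\sigma_i\sigma_{i+1}$; $\sigma_{i+1}\sigma_ix_{i+1}=x_i\sigma_{i+1}\sigma_i$ (for all indices for which these make sense). A positive word is a word in the letters $\sigma_i,x_i$ (possibly empty). For positive words $A,B$, $A\doteq B$ (''positively equal'') means $A$ and $B$ represent the same element of $SB_n^+$. *)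

(* Defs.v *)
From Stdlib Require Import List Arith Lia.
Import ListNotations.

Inductive letter : Type :=
| sg : nat -> letter
| xx : nat -> letter.

Definition word := list letter.

Definition idx (l : letter) : nat := match l with sg i => i | xx i => i end.

Definition positive_word (n : nat) (w : word) : Prop :=
  Forall (fun l => 1 <= idx l <= n - 1) w.

Definition dist (i j : nat) : nat := (i - j) + (j - i).

(* Defining relations of SB_n^+ (as ordered pairs; the congruence below is symmetric). *)
Inductive sb_rel (n : nat) : word -> word -> Prop :=
| rel_ss i j : 1 <= i <= n - 1 -> 1 <= j <= n - 1 -> dist i j > 1 ->
    sb_rel n [sg i; sg j] [sg j; sg i]
| rel_xx i j : 1 <= i <= n - 1 -> 1 <= j <= n - 1 -> dist i j > 1 ->
    sb_rel n [xx i; xx j] [xx j; xx i]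
| rel_xs i j : 1 <= i <= n - 1 -> 1 <= j <= n - 1 -> dist i j <> 1 ->
    sb_rel n [xx i; sg j] [sg j; xx i]
| rel_braid i : 1 <= i -> i + 1 <= n - 1 ->
    sb_rel n [sg i; sg (i+1); sg i] [sg (i+1); sg i; sg (i+1)]
| rel_mix1 i : 1 <= i -> i + 1 <= n - 1 ->
    sb_rel n [sg i; sg (i+1); xx i] [xx (i+1); sg i; sg (i+1)]
| rel_mix2 i : 1 <= i -> i + 1 <= n - 1 ->
    sb_rel n [sg (i+1); sg i; xx (i+1)] [xx i; sg (i+1); sg i].

Inductive peq (n : nat) : word -> word -> Prop :=
| peq_refl w : peq n w w
| peq_sym u v : peq n u v -> peq n v u
| peq_trans u v w : peq n u v -> peq n v w -> peq n u w
| peq_step u v l r : sb_rel n l r -> peq n (u ++ l ++ v) (u ++ r ++ v).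

(* Main.v *)
Require Import Defs.
From Stdlib Require Import List Arith Lia Bool.
Import ListNotations.

Definition cmp (x y : nat) : nat :=
  if x =? y then 0 else if S x =? y then 1 else if S y =? x then 2 else 3.

Definition f (a b : letter) : option word :=
  match a, b with
  | sg i, sg j => match cmp i j with 0 => Some [] | 1 | 2 => Some [sg j; sg i] | _ => Some [sg j] end
  | xx i, xx j => match cmp i j with 0 => Some [] | 1 | 2 => None | _ => Some [xx j] end
  | sg i, xx j => match cmp i j with 1 | 2 => Some [sg j; xx i] | _ => Some [xx j] end
  | xx i, sg j => match cmp i j with 1 | 2 => Some [sg j; sg i] | _ => Some [sg j] end
  end.

Inductive rres := RFail | RBot | ROk (p q : word).

Fixpoint rv (F : nat) (u v : word) : rres :=
  match F with
  | 0 => RFail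
  | S F' =>
    match u, v with
    | [], _ => ROk v []
    | _, [] => ROk [] u
    | a :: u1, b :: v1 =>
      match f a b, f b a with
      | Some fab, Some fba =>
        match rv F' u1 fab with
        | ROk p1 q1 =>
          match rv F' v1 (fba ++ q1) with
          | ROk s t => ROk (p1 ++ t) s
          | e => e
          end
        | e => e
        end
      | _, _ => RBot
      end
    end
  end.

Definition leqb (a b : letter) : bool :=
  match a, b with
  | sg i, sg j => cmp i j =? 0
  | xx i, xx j => cmp i j =? 0
  | _, _ => false
  end.

Fixpoint weqb (u v : word) : bool :=
  match u, v with
  | [], [] => true
  | a :: u, b :: v => leqb a b && weqb u v
  | _, _ => false
  end.

Definition FUEL := 30.

Definition cube_b (a b c : letter) : bool :=
  match f a c, f c a, f c b, f b c with
  | Some fac, Some fca, Some fcb, Some fbc =>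
    match rv FUEL fca fcb with
    | RBot => true
    | RFail => false
    | ROk p q =>
      match f a b, f b a with
      | Some fab, Some fba =>
        match rv FUEL fab (fac ++ p), rv FUEL fba (fbc ++ q) with
        | ROk w1 [], ROk w2 [] =>
          match rv FUEL w1 w2 with ROk [] [] => true | _ => false end
        | _, _ => false
        end
      | _, _ => false
      end
    end
  | _, _, _, _ => true
  end.

Definition L5 : list letter := flat_map (fun i => [sg i; xx i]) [1;2;3;4;5].

Definition allcube : bool :=
  forallb (fun a => forallb (fun b => forallb (fun c => cube_b a b c) L5) L5) L5.


Lemma peq_rel n l r : sb_rel n l r -> peq n l r.
Proof.
  intro H. pose proof (peq_step n [] [] l r H) as H'. simpl in H'.
  rewrite !app_nil_r in H'. exact H'.
Qed.

Lemma peq_app_l n w u v : peq n u v -> peq n (w ++ u) (w ++ v).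
Proof.
  induction 1.
  - apply peq_refl.
  - apply peq_sym; assumption.
  - eapply peq_trans; eassumption.
  - rewrite (app_assoc w u (l ++ v)), (app_assoc w u (r ++ v)). apply peq_step; assumption.
Qed.

Lemma peq_app_r n w u v : peq n u v -> peq n (u ++ w) (v ++ w).
Proof.
  induction 1.
  - apply peq_refl.
  - apply peq_sym; assumption.
  - eapply peq_trans; eassumption.
  - rewrite <- !app_assoc. apply peq_step; assumption.
Qed.

Lemma peq_app n u v u' v' : peq n u v -> peq n u' v' -> peq n (u ++ u') (v ++ v').
Proof.
  intros H1 H2. eapply peq_trans. apply peq_app_r; eassumption. apply peq_app_l; assumption.
Qed.

Lemma sb_rel_len n l r : sb_rel n l r -> length l = length r.
Proof. destruct 1; reflexivity. Qed.

Lemma peq_len n u v : peq n u v -> length u = length v.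
Proof.
  induction 1; try congruence.
  match goal with H : sb_rel _ _ _ |- _ => pose proof (sb_rel_len _ _ _ H) end.
  rewrite !length_app. lia.
Qed.

Definition inr (n : nat) (l : letter) : Prop := 1 <= idx l <= n - 1.

Lemma sb_rel_pos n l r : sb_rel n l r -> Forall (inr n) l /\ Forall (inr n) r.
Proof.
  destruct 1; unfold inr; split; repeat constructor; simpl; lia.
Qed.

Lemma peq_pos n u v : peq n u v -> (Forall (inr n) u <-> Forall (inr n) v).
Proof.
  induction 1; try tauto.
  apply sb_rel_pos in H as [Hl Hr].
  rewrite !Forall_app. tauto.
Qed.

Lemma cmp_cases x y :
  (x = y /\ cmp x y = 0) \/ (S x = y /\ cmp x y = 1) \/ (S y = x /\ cmp x y = 2) \/
  (x <> y /\ S x <> y /\ S y <> x /\ cmp x y = 3).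
Proof.
  unfold cmp.
  destruct (Nat.eqb_spec x y); [left; auto|].
  destruct (Nat.eqb_spec (S x) y); [right; left; auto|].
  destruct (Nat.eqb_spec (S y) x); [right; right; left; auto|].
  right; right; right; auto.
Qed.

Lemma cmp_refl x : cmp x x = 0.
Proof. unfold cmp. rewrite Nat.eqb_refl. reflexivity. Qed.

Ltac cmpcase x y :=
  let E := fresh "E" in
  destruct (cmp_cases x y) as [[? E]|[[? E]|[[? E]|[? [? [? E]]]]]]; rewrite E in *.

Lemma f_rel n a b p q : inr n a -> inr n b -> f a b = Some p -> f b a = Some q ->
  peq n (a :: p) (b :: q).
Proof.
  unfold inr; destruct a as [i|i], b as [j|j]; simpl; intros Ha Hb H1 H2;
  cmpcase i j; cmpcase j i; try lia; inversion H1; inversion H2; subst; simpl in *;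
  try (apply peq_refl).
  all: first
    [ apply peq_rel; constructor; unfold dist; lia
    | apply peq_sym; apply peq_rel; constructor; unfold dist; lia
    | apply peq_rel; replace (S i) with (i + 1) by lia; constructor; lia
    | apply peq_sym; apply peq_rel; replace (S j) with (j + 1) by lia; constructor; lia
    | apply peq_rel; replace (S j) with (j + 1) by lia; constructor; lia
    | apply peq_sym; apply peq_rel; replace (S i) with (i + 1) by lia; constructor; lia ].
Qed.


Definition LP (P : nat -> Prop) (l : letter) := P (idx l).

Lemma f_P (P : nat -> Prop) a b w : LP P a -> LP P b -> f a b = Some w -> Forall (LP P) w.
Proof.
  unfold LP; destruct a as [i|i], b as [j|j]; simpl; intros Ha Hb H;
  destruct (cmp i j) as [|[|[|]]]; inversion H; subst; repeat constructor; assumption.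
Qed.

Lemma rv_P (P : nat -> Prop) F u v p q : Forall (LP P) u -> Forall (LP P) v -> rv F u v = ROk p q ->
  Forall (LP P) p /\ Forall (LP P) q.
Proof.
  revert u v p q; induction F as [|F IH]; intros u v p q Hu Hv H; simpl in H; [discriminate|].
  destruct u as [|a u1]; [inversion H; subst; auto|].
  destruct v as [|b v1]; [inversion H; subst; auto|].
  inversion Hu; inversion Hv; subst.
  destruct (f a b) as [fab|] eqn:E1; [|discriminate].
  destruct (f b a) as [fba|] eqn:E2; [|discriminate].
  pose proof (f_P P a b _ ltac:(assumption) ltac:(assumption) E1).
  pose proof (f_P P b a _ ltac:(assumption) ltac:(assumption) E2).
  destruct (rv F u1 fab) as [| |p1 q1] eqn:E3; try discriminate.
  destruct (IH u1 fab _ _ ltac:(assumption) ltac:(assumption) E3) as [Hp1 Hq1].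
  destruct (rv F v1 (fba ++ q1)) as [| |s t] eqn:E4; try discriminate.
  inversion H; subst.
  destruct (IH v1 (fba ++ q1) _ _ ltac:(assumption) ltac:(apply Forall_app; auto) E4).
  split; [apply Forall_app|]; auto.
Qed.

Lemma rv_sound n F u v p q : Forall (inr n) u -> Forall (inr n) v -> rv F u v = ROk p q ->
  peq n (u ++ p) (v ++ q).
Proof.
  revert u v p q; induction F as [|F IH]; intros u v p q Hu Hv H; simpl in H; [discriminate|].
  destruct u as [|a u1]; [inversion H; subst; rewrite app_nil_r; apply peq_refl|].
  destruct v as [|b v1]; [inversion H; subst; rewrite app_nil_r; apply peq_refl|].
  inversion Hu; inversion Hv; subst.
  destruct (f a b) as [fab|] eqn:E1; [|discriminate].
  destruct (f b a) as [fba|] eqn:E2; [|discriminate].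
  pose proof (f_P (fun x => 1 <= x <= n - 1) a b _ ltac:(unfold LP, inr in *; assumption) ltac:(unfold LP, inr in *; assumption) E1) as Hfab.
  pose proof (f_P (fun x => 1 <= x <= n - 1) b a _ ltac:(unfold LP, inr in *; assumption) ltac:(unfold LP, inr in *; assumption) E2) as Hfba.
  destruct (rv F u1 fab) as [| |p1 q1] eqn:E3; try discriminate.
  destruct (rv_P (fun x => 1 <= x <= n - 1) _ u1 fab _ _ ltac:(exact H3) Hfab E3) as [Hp1 Hq1].
  pose proof (IH u1 fab _ _ ltac:(assumption) Hfab E3) as I1.
  destruct (rv F v1 (fba ++ q1)) as [| |s t] eqn:E4; try discriminate.
  inversion H; subst.
  pose proof (IH v1 (fba ++ q1) _ _ ltac:(assumption) ltac:(apply Forall_app; auto) E4) as I2.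
  simpl.
  eapply peq_trans.
  { apply (peq_app_l n [a]). rewrite app_assoc. apply peq_app_r. exact I1. }
  simpl. eapply peq_trans.
  { rewrite <- app_assoc. change (a :: fab ++ q1 ++ t) with ((a :: fab) ++ q1 ++ t).
    apply peq_app_r. apply (f_rel n a b fab fba); assumption. }
  simpl. apply (peq_app_l n [b]). apply peq_sym. rewrite app_assoc. exact I2.
Qed.


Definition Conc n a b U V := exists p q Z, f a b = Some p /\ f b a = Some q /\
  peq n U (p ++ Z) /\ peq n V (q ++ Z).

Definition IHr n r := forall a b U V, length U < r -> Forall (inr n) (a :: U) ->
  peq n (a :: U) (b :: V) -> Conc n a b U V.

Definition rvspec n (R : rres) (X Y : word) : Prop :=
  match R with
  | ROk p q => exists Z, peq n X (p ++ Z) /\ peq n Y (q ++ Z)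
  | RBot => False
  | RFail => True
  end.

Lemma rv_complete n r (IH : IHr n r) F : forall u v X Y,
  length (u ++ X) <= r -> Forall (inr n) (u ++ X) -> peq n (u ++ X) (v ++ Y) ->
  rvspec n (rv F u v) X Y.
Proof.
  induction F as [|F IHF]; intros u v X Y Hl Hp H; simpl; [exact I|].
  destruct u as [|a u1].
  { simpl. exists Y. split; [exact H | apply peq_refl]. }
  destruct v as [|b v1].
  { simpl. exists X. split; [apply peq_refl | apply peq_sym; exact H]. }
  simpl in *.
  destruct (IH a b (u1 ++ X) (v1 ++ Y) ltac:(lia) Hp H) as (p0 & q0 & Z & E1 & E2 & H1 & H2).
  rewrite E1, E2.
  inversion Hp; subst.
  pose proof (IHF u1 p0 X Z ltac:(lia) ltac:(assumption) H1) as R1.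
  destruct (rv F u1 p0) as [| |p1 q1]; simpl in R1 |- *; try tauto.
  destruct R1 as (Z1 & HX & HZ).
  pose proof (peq_len _ _ _ H) as Hlen. simpl in Hlen.
  pose proof (proj1 (peq_pos _ _ _ H) Hp) as Hp2. inversion Hp2; subst.
  assert (H3 : peq n (v1 ++ Y) ((q0 ++ q1) ++ Z1)).
  { eapply peq_trans; [exact H2|]. rewrite <- app_assoc. apply peq_app_l. exact HZ. }
  pose proof (IHF v1 (q0 ++ q1) Y Z1 ltac:(lia) ltac:(assumption) H3) as R2.
  destruct (rv F v1 (q0 ++ q1)) as [| |s t]; simpl in R2 |- *; try tauto.
  destruct R2 as (Z2 & HY & HZ1).
  exists Z2. split; [|exact HY].
  eapply peq_trans; [exact HX|]. rewrite <- app_assoc. apply peq_app_l. exact HZ1.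
Qed.


Definition mL (psi : nat -> nat) (l : letter) : letter :=
  match l with sg i => sg (psi i) | xx i => xx (psi i) end.

Definition rmap (g : letter -> letter) (R : rres) : rres :=
  match R with ROk p q => ROk (map g p) (map g q) | e => e end.


Lemma f_map (P : nat -> Prop) (psi : nat -> nat) (Hpsi : forall x y, P x -> P y -> cmp (psi x) (psi y) = cmp x y) a b : LP P a -> LP P b -> f (mL psi a) (mL psi b) = option_map (map (mL psi)) (f a b).
Proof.
  unfold LP; destruct a as [i|i], b as [j|j]; simpl; intros Ha Hb; rewrite Hpsi by assumption;
  destruct (cmp i j) as [|[|[|]]]; reflexivity.
Qed.

Lemma rv_map (P : nat -> Prop) (psi : nat -> nat) (Hpsi : forall x y, P x -> P y -> cmp (psi x) (psi y) = cmp x y) F : forall u v, Forall (LP P) u -> Forall (LP P) v ->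
  rv F (map (mL psi) u) (map (mL psi) v) = rmap (mL psi) (rv F u v).
Proof.
  induction F as [|F IH]; intros u v Hu Hv; [reflexivity|].
  destruct u as [|a u1]; [reflexivity|].
  destruct v as [|b v1]; [reflexivity|].
  inversion Hu; inversion Hv; subst.
  cbn [map rv].
  rewrite (f_map P psi Hpsi a b), (f_map P psi Hpsi b a) by assumption.
  destruct (f a b) as [fab|] eqn:E1; [|reflexivity].
  destruct (f b a) as [fba|] eqn:E2; [|reflexivity].
  cbn [option_map].
  pose proof (f_P P a b _ ltac:(assumption) ltac:(assumption) E1) as Hfab.
  pose proof (f_P P b a _ ltac:(assumption) ltac:(assumption) E2) as Hfba.
  rewrite IH by assumption.
  destruct (rv F u1 fab) as [| |p1 q1] eqn:E3; try reflexivity.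
  destruct (rv_P P F u1 fab p1 q1 ltac:(assumption) Hfab E3) as [Hp1 Hq1].
  cbn [rmap]. rewrite <- map_app.
  rewrite IH by (try apply Forall_app; auto).
  destruct (rv F v1 (fba ++ q1)) as [| |s t]; try reflexivity.
  cbn [rmap]. rewrite map_app. reflexivity.
Qed.

Lemma cube_b_map (P : nat -> Prop) (psi : nat -> nat) (Hpsi : forall x y, P x -> P y -> cmp (psi x) (psi y) = cmp x y) a b c : LP P a -> LP P b -> LP P c ->
  cube_b (mL psi a) (mL psi b) (mL psi c) = cube_b a b c.
Proof.
  intros Ha Hb Hc. unfold cube_b.
  rewrite (f_map P psi Hpsi a c), (f_map P psi Hpsi c a), (f_map P psi Hpsi c b), (f_map P psi Hpsi b c) by assumption.
  destruct (f a c) as [fac|] eqn:E1; [|reflexivity].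
  destruct (f c a) as [fca|] eqn:E2; [|reflexivity].
  destruct (f c b) as [fcb|] eqn:E3; [|reflexivity].
  destruct (f b c) as [fbc|] eqn:E4; [|reflexivity].
  cbn [option_map].
  pose proof (f_P P _ _ _ Ha Hc E1) as W1.
  pose proof (f_P P _ _ _ Hc Ha E2) as W2.
  pose proof (f_P P _ _ _ Hc Hb E3) as W3.
  pose proof (f_P P _ _ _ Hb Hc E4) as W4.
  rewrite (rv_map P psi Hpsi) by assumption.
  destruct (rv FUEL fca fcb) as [| |p q] eqn:E5; try reflexivity.
  destruct (rv_P P _ _ _ _ _ W2 W3 E5) as [Wp Wq].
  cbn [rmap].
  rewrite (f_map P psi Hpsi a b), (f_map P psi Hpsi b a) by assumption.
  destruct (f a b) as [fab|] eqn:E6; [|reflexivity].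
  destruct (f b a) as [fba|] eqn:E7; [|reflexivity].
  cbn [option_map].
  pose proof (f_P P _ _ _ Ha Hb E6) as W6.
  pose proof (f_P P _ _ _ Hb Ha E7) as W7.
  rewrite <- !map_app.
  rewrite !(rv_map P psi Hpsi) by (try apply Forall_app; auto).
  assert (W8 : Forall (LP P) (fac ++ p)) by (apply Forall_app; auto).
  assert (W9 : Forall (LP P) (fbc ++ q)) by (apply Forall_app; auto).
  destruct (rv FUEL fab (fac ++ p)) as [| |w1 e1] eqn:E8; try reflexivity;
  destruct (rv FUEL fba (fbc ++ q)) as [| |w2 e2] eqn:E9; try reflexivity;
  try (destruct e1; reflexivity); try (destruct e2; reflexivity).
  destruct (rv_P P _ _ _ _ _ W6 W8 E8) as [Ww1 _].
  destruct (rv_P P _ _ _ _ _ W7 W9 E9) as [Ww2 _].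
  cbn [rmap].
  destruct e1; [|reflexivity]. destruct e2; [|reflexivity].
  cbn [map].
  rewrite (rv_map P psi Hpsi) by assumption.
  destruct (rv FUEL w1 w2) as [| |r1 r2]; try reflexivity.
  cbn [rmap]. destruct r1; destruct r2; reflexivity.
Qed.


Definition N5 := [1;2;3;4;5].
Definition trip : list (nat * nat * nat) :=
  flat_map (fun x => flat_map (fun y => map (fun z => (x, y, z)) N5) N5) N5.

Definition find3 (c1 c2 c3 : nat) : option (nat * nat * nat) :=
  find (fun t => match t with (x, y, z) =>
    (cmp x y =? c1) && (cmp x z =? c2) && (cmp y z =? c3) end) trip.

Lemma find3_ex c1 c2 c3 : find3 c1 c2 c3 <> None ->
  exists x y z, In (x, y, z) trip /\ cmp x y = c1 /\ cmp x z = c2 /\ cmp y z = c3.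
Proof.
  unfold find3. destruct (find _ trip) as [[[x y] z]|] eqn:E; [|congruence].
  intros _. apply find_some in E as [Hin Hp].
  rewrite !Bool.andb_true_iff, !Nat.eqb_eq in Hp.
  exists x, y, z. tauto.
Qed.

Lemma compress i j k : exists x y z, In (x, y, z) trip /\
  cmp x y = cmp i j /\ cmp x z = cmp i k /\ cmp y z = cmp j k.
Proof.
  cmpcase i j; cmpcase i k; cmpcase j k;
  first [ lia | (apply find3_ex; vm_compute; discriminate) ].
Qed.

Definition types : list ((nat -> letter) * (nat -> letter) * (nat -> letter)) :=
  [(sg, sg, sg); (sg, sg, xx); (sg, xx, sg); (sg, xx, xx);
   (xx, sg, sg); (xx, sg, xx); (xx, xx, sg); (xx, xx, xx)].

Definition allcube2 : bool :=
  forallb (fun t => match t with (x, y, z) =>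
    forallb (fun c => match c with (ca, cb, cc) => cube_b (ca x) (cb y) (cc z) end) types end) trip.

Lemma allcube2_true : allcube2 = true.
Proof. vm_compute. reflexivity. Qed.

Definition swp (c : nat) : nat := match c with 1 => 2 | 2 => 1 | c => c end.

Lemma cmp_swap x y : cmp y x = swp (cmp x y).
Proof. cmpcase x y; cmpcase y x; first [lia | reflexivity]. Qed.

Lemma cmp0 x y : cmp x y = 0 -> x = y.
Proof. intro H. cmpcase x y; lia. Qed.

Definition relab (l : letter) (x : nat) : letter :=
  match l with sg _ => sg x | xx _ => xx x end.

Lemma cube_all a b c : cube_b a b c = true.
Proof.
  destruct (compress (idx a) (idx b) (idx c)) as (x & y & z & Hin & H1 & H2 & H3).
  set (psi := fun w => if w =? x then idx a else if w =? y then idx b else idx c).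
  set (P := fun w => w = x \/ w = y \/ w = z).
  assert (Px : psi x = idx a) by (unfold psi; rewrite Nat.eqb_refl; reflexivity).
  assert (Py : psi y = idx b).
  { unfold psi. destruct (Nat.eqb_spec y x).
    - subst. rewrite cmp_refl in H1. symmetry in H1. apply cmp0 in H1. auto.
    - rewrite Nat.eqb_refl. reflexivity. }
  assert (Pz : psi z = idx c).
  { unfold psi. destruct (Nat.eqb_spec z x).
    - subst. rewrite cmp_refl in H2. symmetry in H2. apply cmp0 in H2. auto.
    - destruct (Nat.eqb_spec z y).
      + subst. rewrite cmp_refl in H3. symmetry in H3. apply cmp0 in H3. auto.
      + reflexivity. }
  assert (Hpsi : forall u v, P u -> P v -> cmp (psi u) (psi v) = cmp u v).
  { intros u v Hu Hv; unfold P in Hu, Hv; destruct Hu as [Hu|[Hu|Hu]]; destruct Hv as [Hv|[Hv|Hv]]; subst u v; rewrite ?Px, ?Py, ?Pz, ?cmp_refl; auto;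
    try (rewrite (cmp_swap (idx a)), (cmp_swap x); congruence);
    try (rewrite (cmp_swap (idx b)), (cmp_swap y); congruence);
    try (rewrite (cmp_swap (idx a)), (cmp_swap x); congruence).
    all: rewrite (cmp_swap _ (idx c)), (cmp_swap _ z); congruence. }
  assert (Ea : mL psi (relab a x) = a) by (destruct a; simpl; rewrite Px; reflexivity).
  assert (Eb : mL psi (relab b y) = b) by (destruct b; simpl; rewrite Py; reflexivity).
  assert (Ec : mL psi (relab c z) = c) by (destruct c; simpl; rewrite Pz; reflexivity).
  rewrite <- Ea, <- Eb, <- Ec.
  rewrite (cube_b_map P psi Hpsi).
  2-4: unfold LP, P; destruct a, b, c; simpl; auto.
  pose proof allcube2_true as HA. unfold allcube2 in HA.
  rewrite forallb_forall in HA. specialize (HA _ Hin). cbv beta iota in HA.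
  rewrite forallb_forall in HA.
  destruct a, b, c; simpl;
  match goal with |- cube_b (?A _) (?B _) (?C _) = true =>
    apply (HA (A, B, C)); simpl; tauto end.
Qed.


Lemma f_self a : f a a = Some [].
Proof. destruct a; simpl; rewrite cmp_refl; reflexivity. Qed.

Lemma inr_f n a b w : inr n a -> inr n b -> f a b = Some w -> Forall (inr n) w.
Proof. intros. exact (f_P (fun x => 1 <= x <= n - 1) a b w H H0 H1). Qed.

Lemma inr_rv n F u v p q : Forall (inr n) u -> Forall (inr n) v -> rv F u v = ROk p q ->
  Forall (inr n) p /\ Forall (inr n) q.
Proof. intros. exact (rv_P (fun x => 1 <= x <= n - 1) F u v p q H H0 H1). Qed.

Lemma combine n r (IH : IHr n r) a b c U T V :
  length T = r -> Forall (inr n) (a :: U) -> Forall (inr n) (c :: T) -> Forall (inr n) (b :: V) ->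
  Conc n a c U T -> Conc n c b T V -> Conc n a b U V.
Proof.
  intros HlT HpU HpT HpV (fac & fca & Z1 & E1 & E2 & HU & HT1) (fcb & fbc & Z2 & E3 & E4 & HT2 & HV).
  inversion HpU as [|? ? Ha HU']; inversion HpT as [|? ? Hc HT']; inversion HpV as [|? ? Hb HV']; subst.
  pose proof (cube_all a b c) as HC. unfold cube_b in HC.
  rewrite E1, E2, E3, E4 in HC.
  assert (H12 : peq n (fca ++ Z1) (fcb ++ Z2)) by (eapply peq_trans; [apply peq_sym; exact HT1| exact HT2]).
  pose proof (peq_len _ _ _ HT1) as L1.
  pose proof (proj1 (peq_pos _ _ _ HT1) HT') as P1.
  pose proof (rv_complete n (length T) IH FUEL fca fcb Z1 Z2 ltac:(lia) P1 H12) as R.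
  pose proof (inr_f n _ _ _ Ha Hc E1) as Wac.
  pose proof (inr_f n _ _ _ Hc Ha E2) as Wca.
  pose proof (inr_f n _ _ _ Hc Hb E3) as Wcb.
  pose proof (inr_f n _ _ _ Hb Hc E4) as Wbc.
  destruct (rv FUEL fca fcb) as [| |p q] eqn:E5; try discriminate HC; simpl in R; [contradiction|].
  destruct R as (Z & HZ1 & HZ2).
  destruct (inr_rv n _ _ _ _ _ Wca Wcb E5) as [Wp Wq].
  destruct (f a b) as [fab|] eqn:E6; try discriminate HC.
  destruct (f b a) as [fba|] eqn:E7; try discriminate HC.
  pose proof (inr_f n _ _ _ Ha Hb E6) as Wab.
  pose proof (inr_f n _ _ _ Hb Ha E7) as Wba.
  assert (W8 : Forall (inr n) (fac ++ p)) by (apply Forall_app; auto).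
  assert (W9 : Forall (inr n) (fbc ++ q)) by (apply Forall_app; auto).
  destruct (rv FUEL fab (fac ++ p)) as [| |w1 e1] eqn:E8; try discriminate HC;
  destruct (rv FUEL fba (fbc ++ q)) as [| |w2 e2] eqn:E9; try discriminate HC;
  destruct e1; try discriminate HC; destruct e2; try discriminate HC.
  destruct (inr_rv n _ _ _ _ _ Wab W8 E8) as [Ww1 _].
  destruct (inr_rv n _ _ _ _ _ Wba W9 E9) as [Ww2 _].
  destruct (rv FUEL w1 w2) as [| |r1 r2] eqn:E10; try discriminate HC.
  destruct r1; try discriminate HC. destruct r2; try discriminate HC.
  pose proof (rv_sound n _ _ _ _ _ Wab W8 E8) as S1.
  pose proof (rv_sound n _ _ _ _ _ Wba W9 E9) as S2.
  pose proof (rv_sound n _ _ _ _ _ Ww1 Ww2 E10) as S3.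
  rewrite app_nil_r in S1. rewrite app_nil_r in S2. rewrite !app_nil_r in S3.
  exists fab, fba, (w1 ++ Z). repeat split; auto.
  - eapply peq_trans; [exact HU|].
    eapply peq_trans; [apply peq_app_l; exact HZ1|].
    rewrite !app_assoc. apply peq_app_r. apply peq_sym. exact S1.
  - eapply peq_trans; [exact HV|].
    eapply peq_trans; [apply peq_app_l; exact HZ2|].
    rewrite !app_assoc. apply peq_app_r.
    eapply peq_trans; [apply peq_sym; exact S2|]. apply peq_app_l. apply peq_sym. exact S3.
Qed.

Lemma main_r n r (IH : IHr n r) : forall W1 W2, peq n W1 W2 ->
  forall a U b V, W1 = a :: U -> W2 = b :: V -> length U = r -> Forall (inr n) W1 ->
  Conc n a b U V.
Proof.
  induction 1 as [w|u v H IHH|u v w H1 IH1 H2 IH2|u v l rr Hr]; intros a U b V EW1 EW2 HL HP.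
  - rewrite EW1 in EW2; inversion EW2; subst b V. exists [], [], U. rewrite f_self. repeat split; apply peq_refl.
  - subst u v. pose proof (peq_len _ _ _ H) as L. simpl in L.
    destruct (IHH b V a U eq_refl eq_refl ltac:(lia) (proj2 (peq_pos _ _ _ H) HP))
      as (p & q & Z & A1 & A2 & A3 & A4).
    exists q, p, Z. auto.
  - subst u w. pose proof (peq_len _ _ _ H1) as L. simpl in L.
    destruct v as [|c T]; [discriminate L|]. simpl in L.
    pose proof (proj1 (peq_pos _ _ _ H1) HP) as HPv.
    pose proof (proj1 (peq_pos _ _ _ H2) HPv) as HPw.
    apply (combine n r IH a b c U T V); auto; try lia.
    all: first [ apply IH1; auto; lia | apply IH2; auto; lia | idtac ].
    all: idtac.
  - destruct u as [|x u'].
    + simpl in EW1, EW2.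
      destruct Hr; simpl in EW1, EW2; inversion EW1; inversion EW2; subst; unfold Conc;
      simpl f; unfold dist in *;
      try (cmpcase i j); try (cmpcase j i); try (cmpcase i (i + 1)); try (cmpcase (i + 1) i);
      try lia;
      (eexists _, _, v; split; [reflexivity|split; [reflexivity|split; apply peq_refl]]).
    + simpl in EW1, EW2. inversion EW1; inversion EW2; subst.
      exists [], [], (u' ++ rr ++ v). rewrite f_self. simpl. repeat split.
      * apply peq_step; assumption.
      * apply peq_refl.
Qed.

Lemma all_IHr n r : IHr n r.
Proof.
  induction r as [|r IHr0].
  - intros a b U V H. simpl in H. lia.
  - intros a b U V HL HP H.
    destruct (Nat.eq_dec (length U) r) as [E|E].
    + exact (main_r n r IHr0 _ _ H a U b V eq_refl eq_refl E HP).
    + apply IHr0; auto; lia.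
Qed.

Lemma main n a b U V : Forall (inr n) (a :: U) -> peq n (a :: U) (b :: V) -> Conc n a b U V.
Proof. intros. apply (all_IHr n (S (length U))); auto. Qed.


Lemma sb_rel_rev n l r : sb_rel n l r -> peq n (rev l) (rev r).
Proof.
  destruct 1; simpl.
  - apply peq_rel. constructor; unfold dist in *; lia.
  - apply peq_rel. constructor; unfold dist in *; lia.
  - apply peq_sym, peq_rel. constructor; auto.
  - apply peq_rel. constructor; lia.
  - apply peq_sym, peq_rel. constructor; lia.
  - apply peq_sym, peq_rel. constructor; lia.
Qed.

Lemma peq_rev n u v : peq n u v -> peq n (rev u) (rev v).
Proof.
  induction 1.
  - apply peq_refl.
  - apply peq_sym; assumption.
  - eapply peq_trans; eassumption.
  - rewrite !rev_app_distr. rewrite <- !app_assoc.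
    apply peq_app_l. apply peq_app_r. apply sb_rel_rev; assumption.
Qed.

Lemma left_gen n a b A B : positive_word n A -> positive_word n B -> inr n a -> inr n b ->
  peq n (a :: A) (b :: B) ->
  exists p q Z, f a b = Some p /\ f b a = Some q /\ positive_word n Z /\
    peq n A (p ++ Z) /\ peq n B (q ++ Z).
Proof.
  intros HA HB Ha Hb H.
  destruct (main n a b A B (Forall_cons _ Ha HA) H) as (p & q & Z & E1 & E2 & H1 & H2).
  exists p, q, Z. repeat split; auto.
  pose proof (proj1 (peq_pos _ _ _ H1) HA) as HZ. apply Forall_app in HZ. apply HZ.
Qed.

Lemma left_gen_r n a b A B : positive_word n A -> positive_word n B -> inr n a -> inr n b ->
  peq n (A ++ [a]) (B ++ [b]) ->
  exists p q Z, f a b = Some p /\ f b a = Some q /\ positive_word n Z /\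
    peq n A (Z ++ rev p) /\ peq n B (Z ++ rev q).
Proof.
  intros HA HB Ha Hb H.
  apply peq_rev in H. rewrite !rev_app_distr in H. simpl in H.
  destruct (left_gen n a b (rev A) (rev B)) as (p & q & Z & E1 & E2 & HZ & H1 & H2); auto.
  1-2: apply Forall_rev; auto.
  exists p, q, (rev Z). repeat split; auto.
  - apply Forall_rev; auto.
  - apply peq_rev in H1. rewrite rev_involutive, rev_app_distr in H1. exact H1.
  - apply peq_rev in H2. rewrite rev_involutive, rev_app_distr in H2. exact H2.
Qed.

Ltac fin i k Z := 
  intros Hd; cmpcase i k; cmpcase k i; unfold dist in *; try lia;
  match goal with
  | E1 : Some _ = Some _ , E2 : Some _ = Some _ |- _ => inversion E1; inversion E2; subst
  | _ => idtac end;
  try discriminate;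
  first [ exists Z; simpl; auto
        | eapply peq_trans; [eassumption | apply peq_sym; rewrite ?app_nil_r in *; eassumption]
        | idtac ].

Theorem proposition2p1 (n : nat) (A B : word) (i k : nat) :
  2 <= n -> positive_word n A -> positive_word n B ->
  1 <= i <= n - 1 -> 1 <= k <= n - 1 ->
  (peq n (sg i :: A) (sg k :: B) ->
     (k = i -> peq n A B) /\
     (dist k i = 1 -> exists Z, positive_word n Z /\
        peq n A (sg k :: sg i :: Z) /\ peq n B (sg i :: sg k :: Z)) /\
     (dist k i >= 2 -> exists Z, positive_word n Z /\
        peq n A (sg k :: Z) /\ peq n B (sg i :: Z))) /\
  (peq n (sg i :: A) (xx k :: B) ->
     (dist k i = 1 -> exists Z, positive_word n Z /\
        peq n A (sg k :: xx i :: Z) /\ peq n B (sg i :: sg k :: Z)) /\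
     (dist k i <> 1 -> exists Z, positive_word n Z /\
        peq n A (xx k :: Z) /\ peq n B (sg i :: Z))) /\
  (peq n (xx i :: A) (xx k :: B) ->
     (k = i -> peq n A B) /\
     (dist k i >= 2 -> exists Z, positive_word n Z /\
        peq n A (xx k :: Z) /\ peq n B (xx i :: Z)) /\
     dist k i <> 1) /\
  (peq n (A ++ [sg i]) (B ++ [sg k]) ->
     (k = i -> peq n A B) /\
     (dist k i = 1 -> exists Z, positive_word n Z /\
        peq n A (Z ++ [sg i; sg k]) /\ peq n B (Z ++ [sg k; sg i])) /\
     (dist k i >= 2 -> exists Z, positive_word n Z /\
        peq n A (Z ++ [sg k]) /\ peq n B (Z ++ [sg i]))) /\
  (peq n (A ++ [sg i]) (B ++ [xx k]) ->
     (dist k i = 1 -> exists Z, positive_word n Z /\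
        peq n A (Z ++ [xx i; sg k]) /\ peq n B (Z ++ [sg k; sg i])) /\
     (dist k i <> 1 -> exists Z, positive_word n Z /\
        peq n A (Z ++ [xx k]) /\ peq n B (Z ++ [sg i]))) /\
  (peq n (A ++ [xx i]) (B ++ [xx k]) ->
     (k = i -> peq n A B) /\
     (dist k i >= 2 -> exists Z, positive_word n Z /\
        peq n A (Z ++ [xx k]) /\ peq n B (Z ++ [xx i])) /\
     dist k i <> 1).
Proof.
  intros Hn HA HB Hi Hk.
  assert (Hsi : inr n (sg i)) by (unfold inr; simpl; lia).
  assert (Hsk : inr n (sg k)) by (unfold inr; simpl; lia).
  assert (Hxi : inr n (xx i)) by (unfold inr; simpl; lia).
  assert (Hxk : inr n (xx k)) by (unfold inr; simpl; lia).
  refine (conj _ (conj _ (conj _ (conj _ (conj _ _))))); intro H.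
  all: match goal with
       | H : peq _ (?a :: ?A) (?b :: ?B) |- _ =>
           destruct (left_gen n a b A B HA HB ltac:(assumption) ltac:(assumption) H)
                 as (p & q & Z & Ep & Eq & HZ & HA' & HB')
       | H : peq _ (?A ++ [?a]) (?B ++ [?b]) |- _ =>
           destruct (left_gen_r n a b A B HA HB ltac:(assumption) ltac:(assumption) H)
                 as (p & q & Z & Ep & Eq & HZ & HA' & HB')
       end;
       simpl in Ep, Eq.
  all: repeat split; fin i k Z.
  all: idtac.
Qed.
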